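(* In the setting described in the context (Assumptions A and B hold), let the VS-PGR scheme be run with step size $\alpha>0$ satisfying $\alpha\le L$ and a non-decreasing sequence of batch sizes $\{S_k\}$ with $S_0\ge 1/\alpha^2$. Let $\tilde L\triangleq\sqrt{1+2(1+2\alpha^2)\nu_1^2+2L^2}$ and $\nu^2\triangleq 2(1+2\alpha^2)\nu_1^2\|x^*\|^2+(1+2\alpha^2)\nu_2^2$. Then for every $k\ge0$, $$\mathbb{E}\big[\|x_{k+1}-x^*\|^2\mid\mathcal{F}_k\big]\le\big(1-2\alpha\eta+\alpha^2\tilde L^2\big)\|x_k-x^*\|^2+\frac{\nu^2}{S_k}\quad\text{a.s.}$$
   Context: Game: $n$ players; player $i$ chooses $x_i\in\mathbb{R}^{d_i}$, $x=(x_1,\dots,x_n)\in\mathbb{R}^d$, and solves $\min_{x_i} f_i(x_i,x_{-i})+r_i(x_i)$ with $f_i(x)=\mathbb{E}[\psi_i(x;\xi_i)]$, $\xi_i$ a random vector in $\mathbb{R}^{m_i}$, $\psi_i:\mathbb{R}^d\times\mathbb{R}^{m_i}\to\mathbb{R}$. A Nash equilibrium (NE) is $x^*$ such that for each $i$, $x_i^*$ minimizes $f_i(\cdot,x_{-i}^* )+r_i(\cdot)$. Assumption A: for each $i$, (i) $r_i$ is lower semicontinuous and convex with effective domain $\mathcal{R}_i$; (ii) for every $x_{-i}\in\prod_{j\ne i}\mathcal{R}_j$, $f_i(\cdot,x_{-i})$ is continuously differentiable and convex on an open set containing $\mathcal{R}_i$; (iii) for every such $x_{-i}$ and every $\xi_i$,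 $\psi_i(\cdot,x_{-i};\xi_i)$ is differentiable on an open set containing $\mathcal{R}_i$. Let $\mathcal{R}=\prod_j\mathcal{R}_j$ and $G(x)=(\nabla_{x_i}f_i(x))_{i=1}^n$. $\mathrm{prox}_{\alpha r_i}(z)=\arg\min_y\big(r_i(y)+\frac1{2\alpha}\|y-z\|^2\big)$. VS-PGR scheme: with $x_{i,0}\in\mathcal{R}_i$, at iteration $k$ each player $i$ draws $S_k$ realizations $\xi_{i,k}^1,\dots,\xi_{i,k}^{S_k}$ of $\xi_i$ and sets $x_{i,k+1}=\mathrm{prox}_{\alpha r_i}\big[x_{i,k}-\frac{\alpha}{S_k}\sum_{p=1}^{S_k}\nabla_{x_i}\psi_i(x_k;\xi_{i,k}^p)\big]$. Let $\bar w_{k,S_k}=\frac1{S_k}\sum_{p=1}^{S_k}(\nabla_{x_i}\psi_i(x_k;\xi_{i,k}^p))_{i=1}^n-G(x_k)$ and $\mathcal{F}_k=\sigma\{x_0,\dots,x_k\}$. Assumption B: (i) $\|G(x)-G(y)\|\le L\|x-y\|$ for all $x,y\in\mathcal{R}$; (ii) $(G(x)-G(y))^T(x-y)\ge\eta\|x-y\|^2$ for all $x,y\in\mathcal{R}$, with $\eta>0$; (iii) there are $\nu_1,\nu_2\ge0$ with $\mathbb{E}[\|\bar w_{k,S_k}\|^2\mid\mathcal{F}_k]\le(\nu_1^2\|x_k\|^2+\nu_2^2)/S_k$ a.s. for all $k\ge0$. Under these assumptions the NE $x^*$ exists and is unique. *)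

(* Defs.v *)
From HB Require Import structures.
From mathcomp Require Import all_boot all_order all_algebra.
From mathcomp Require Import all_classical all_reals all_analysis.
Set Implicit Arguments. Unset Strict Implicit. Unset Printing Implicit Defensive.
Import Order.TTheory GRing.Theory Num.Theory.
Import numFieldNormedType.Exports.
Local Open Scope classical_set_scope.
Local Open Scope ring_scope.

Section GameDefs.
Variable R : realType.

Definition sqn (m : nat) (v : 'rV[R]_m) : R := \sum_(j < m) v 0 j ^+ 2.
Definition vdot (m : nat) (u v : 'rV[R]_m) : R := \sum_(j < m) u 0 j * v 0 j.

(** Joint strategy space R^d = prod_i R^{d_i}, as a dependent family of blocks. *)
Definition joint (n : nat) (d : 'I_n -> nat) := forall i : 'I_n, 'rV[R]_(d i).

Definition jsub (n : nat) (d : 'I_n -> nat) (x y : joint d) : joint d :=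
  fun i => x i - y i.
Definition jnorm (n : nat) (d : 'I_n -> nat) (x : joint d) : R :=
  Num.sqrt (\sum_(i < n) sqn (x i)).
Definition jdot (n : nat) (d : 'I_n -> nat) (x y : joint d) : R :=
  \sum_(i < n) vdot (x i) (y i).

Definition jupd (n : nat) (d : 'I_n -> nat) (x : joint d) (i : 'I_n)
  (v : 'rV[R]_(d i)) : joint d :=
  @dfwith _ (fun j => 'rV[R]_(d j)) x i v.

Definition grad (m : nat) (g : 'rV[R]_m -> R) (y : 'rV[R]_m) : 'rV[R]_m :=
  \row_(j < m) derive g y (delta_mx 0 j).

Definition pgrad (n : nat) (d : 'I_n -> nat) (h : joint d -> R) (i : 'I_n)
  (x : joint d) : 'rV[R]_(d i) :=
  grad (fun y => h (jupd x y)) (x i).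

Definition econvex (m : nat) (g : 'rV[R]_m -> \bar R) : Prop :=
  forall (a b : 'rV[R]_m) (t : R), 0 <= t <= 1 ->
    (g (t *: a + (1 - t) *: b)%R <= t%:E * g a + (1 - t)%R%:E * g b)%E.

Definition elsc (m : nat) (g : 'rV[R]_m -> \bar R) : Prop :=
  forall c : R, closed [set y | (g y <= c%:E)%E].

Definition edom (m : nat) (g : 'rV[R]_m -> \bar R) : set 'rV[R]_m :=
  [set y | (g y < +oo)%E].

Definition convex_on (m : nat) (U : set 'rV[R]_m) (g : 'rV[R]_m -> R) : Prop :=
  forall (a b : 'rV[R]_m) (t : R), U a -> U b -> 0 <= t <= 1 ->
    U (t *: a + (1 - t) *: b) ->
    g (t *: a + (1 - t) *: b) <= t * g a + (1 - t) * g b.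

Definition is_prox (m : nat) (r : 'rV[R]_m -> \bar R) (alpha : R)
  (z p : 'rV[R]_m) : Prop :=
  forall y : 'rV[R]_m,
    (r p + (sqn (p - z) / (2 * alpha))%:E <= r y + (sqn (y - z) / (2 * alpha))%:E)%E.

Definition is_NE (n : nat) (d : 'I_n -> nat) (f : forall i : 'I_n, joint d -> R)
  (r : forall i : 'I_n, 'rV[R]_(d i) -> \bar R) (xs : joint d) : Prop :=
  forall (i : 'I_n) (y : 'rV[R]_(d i)),
    ((f i xs)%:E + r i (xs i) <= (f i (jupd xs y))%:E + r i y)%E.
End GameDefs.

Definition is_cond_exp (dT : measure_display) (T : measurableType dT)
  (R : realType) (P : probability T R) (G : set (set T)) (X Y : T -> R) : Prop :=
  [/\ (forall t, 0 <= Y t),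
      (forall B : set R, measurable B -> G (Y @^-1` B)) &
      (forall A, G A -> (\int[P]_(t in A) (Y t)%:E = \int[P]_(t in A) (X t)%:E)%E)].

(** F_k = sigma{x_0, ..., x_k}: the sigma-algebra generated by all the real
    coordinates of the random vectors x_0, ..., x_k. *)
Definition natural_filtration (dT : measure_display) (T : measurableType dT)
  (R : realType) (n : nat) (d : 'I_n -> nat) (x : nat -> T -> joint R d) (k : nat)
  : set (set T) :=
  <<s [set A | exists (j : nat) (i : 'I_n) (l : 'I_(d i)) (c : R),
          (j <= k)%N /\ A = [set t | x j t i 0 l <= c]] >>.

(* Main.v *)
Require Import Defs.
From HB Require Import structures.
From mathcomp Require Import all_boot all_order all_algebra.
From mathcomp Require Import all_classical all_reals all_analysis.
From mathcomp Require Import measurable_realfun.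
From mathcomp Require Import ring lra.
Import Order.TTheory GRing.Theory Num.Theory.
Import numFieldNormedType.Exports.
Local Open Scope classical_set_scope.
Local Open Scope ring_scope.
Set Implicit Arguments. Unset Strict Implicit.

Section Alg.
Variable R : realType.

Lemma sqn_ge0 m (u : 'rV[R]_m) : 0 <= sqn u.
Proof. by apply: sumr_ge0 => j _; exact: sqr_ge0. Qed.

Lemma sqn_shift m (u v : 'rV[R]_m) t :
  sqn (u + t *: v) = sqn u + 2 * t * vdot u v + t ^+ 2 * sqn v.
Proof.
rewrite /sqn /vdot !mulr_sumr -!big_split /=; apply: eq_bigr => j _.
rewrite !mxE; ring.
Qed.

Lemma block_ineq m (p s z g : 'rV[R]_m) (a : R) : 0 < a ->
  0 <= vdot (p - z) (s - p) / a + vdot g (p - s) ->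
  sqn (p - s) <= sqn (z - s + a *: g).
Proof.
move=> a0 H.
have key : sqn (z - s + a *: g) = sqn (p - s) + sqn (z - p + a *: g)
   + 2 * a * (vdot (p - z) (s - p) / a + vdot g (p - s)).
  rewrite /sqn /vdot mulr_suml mulrDr !mulr_sumr -!big_split /=; apply: eq_bigr => j _.
  rewrite !mxE; field; lra.
rewrite key; have := sqn_ge0 (z - p + a *: g).
have : 0 <= 2 * a * (vdot (p - z) (s - p) / a + vdot g (p - s)).
  apply: mulr_ge0 => //; lra.
lra.
Qed.


Lemma lim_le_aux (A B C : R) :
  (forall t : R, 0 < t <= 1 -> A <= B + t * C) -> A <= B.
Proof.
move=> H; rewrite leNgt; apply/negP => BA.
set C' := `|C| + 1.
have C'0 : 0 < C' by rewrite /C'; have := normr_ge0 C; lra.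
set t := Num.min 1 ((A - B) / (2 * C')).
have t0 : 0 < t.
  rewrite /t lt_min ltr01 /=; apply: divr_gt0; lra.
have t1 : t <= 1 by rewrite /t ge_min lexx.
have Ht01 : 0 < t <= 1 by rewrite t0 t1.
have := H t Ht01.
have ht : t <= (A - B) / (2 * C') by rewrite /t ge_min lexx orbT.
have : t * C <= t * C'.
  apply: ler_wpM2l; first lra. rewrite /C'; have := ler_norm C; lra.
have : t * C' <= (A - B) / 2.
  have -> : (A - B) / 2 = ((A - B) / (2 * C')) * C' by field; lra.
  apply: ler_wpM2r; lra.
lra.
Qed.

Lemma fin_of m (r : 'rV[R]_m -> \bar R) v :
  (forall y, (-oo < r y)%E) -> (r v < +oo)%E -> r v = (fine (r v))%:E.
Proof.
move=> h1 h2; rewrite fineK //; rewrite fin_numE -ltNye -ltey h1 /=; exact: h2.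
Qed.

Lemma conv_pt m (p y : 'rV[R]_m) t : t *: y + (1 - t) *: p = p + t *: (y - p).
Proof. apply/rowP => j; rewrite !mxE; ring. Qed.

Lemma prox_ineq m (r : 'rV[R]_m -> \bar R) a z p y : 0 < a ->
  econvex r -> (forall v, (-oo < r v)%E) -> is_prox r a z p -> (r y < +oo)%E ->
  (r p < +oo)%E /\ fine (r p) - fine (r y) <= vdot (p - z) (y - p) / a.
Proof.
move=> a0 cvx fin prox ry.
have rp : (r p < +oo)%E.
  have := prox y; rewrite (fin_of fin ry) -EFinD => H.
  have : (r p + (sqn (p - z) / (2 * a))%:E < +oo)%E.
    by apply: (le_lt_trans H); rewrite ltry.
  by move: (r p) => [x||] //= _; exact: ltry.
split => //.
set rP := fine (r p); set rY := fine (r y).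
apply: (@lim_le_aux _ _ (sqn (y - p) / (2 * a))) => t /andP[t0 t1].
have hc := cvx y p t; rewrite (fin_of fin rp) (fin_of fin ry) -/rP -/rY in hc.
have {}hc : (r (t *: y + (1 - t) *: p)%R <= (t * rY + (1 - t) * rP)%:E)%E.
  by apply: (le_trans (hc _)); [rewrite t1 ltW|rewrite EFinD -!EFinM].
have hp := prox (t *: y + (1 - t) *: p).
rewrite (fin_of fin rp) -/rP in hp.
have := le_trans hp (leeD2r _ hc); rewrite -!EFinD lee_fin.
rewrite conv_pt.
have -> : p + t *: (y - p) - z = (p - z) + t *: (y - p) by apply/rowP => j; rewrite !mxE; ring.
rewrite sqn_shift.
move=> H.
have H2 : t * (rP - rY - (vdot (p - z) (y - p) / a + t * (sqn (y - p) / (2 * a)))) <= 0.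
  have -> : t * (rP - rY - (vdot (p - z) (y - p) / a + t * (sqn (y - p) / (2 * a))))
    = (rP + sqn (p - z) / (2 * a)) - (t * rY + (1 - t) * rP + (sqn (p - z) + 2 * t * vdot (p - z) (y - p) + t ^+ 2 * sqn (y - p)) / (2 * a)).
    field; lra.
  lra.
move: H2; rewrite pmulr_rle0 //; lra.
Qed.


Lemma grad_vdot m (F : 'rV[R]_m -> R) s h : differentiable F s ->
  'D_h F s = vdot (grad F s) h.
Proof.
move=> dF; rewrite deriveE //.
rewrite [in LHS](row_sum_delta h) linear_sum /vdot; apply: eq_bigr => j _.
rewrite linearZ /= /grad mxE -deriveE // mulrC.
done.
Qed.

Lemma NE_ineq m (F : 'rV[R]_m -> R) (r : 'rV_m -> \bar R) s y :
  econvex r -> (forall v, (-oo < r v)%E) ->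
  (forall v, ((F s)%:E + r s <= (F v)%:E + r v)%E) ->
  differentiable F s -> (r s < +oo)%E -> (r y < +oo)%E ->
  fine (r s) - fine (r y) <= vdot (grad F s) (y - s).
Proof.
move=> cvx fin NE dF rs ry.
set h := y - s.
have Hc : (fun t : R => t^-1 *: ((F \o shift s) (t *: h) - F s)) @ 0^'+ --> 'D_h F s.
  apply: cvg_dnbhs_at_right. exact: (diff_derivable (v:=h) dF).
rewrite -grad_vdot // -(cvg_lim _ Hc) //.
apply: limr_ge; first by apply/cvg_ex; exists ('D_h F s).
near=> t.
have t0 : 0 < t by near: t; exact: nbhs_right_gt.
have t1 : t <= 1 by near: t; apply: nbhs_right_le; exact: ltr01.
have hc := cvx y s t; rewrite (fin_of fin rs) (fin_of fin ry) in hc.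
have {}hc : (r (t *: y + (1 - t) *: s)%R <= (t * fine (r y) + (1 - t) * fine (r s))%:E)%E.
  by apply: (le_trans (hc _)); [rewrite t1 ltW|rewrite EFinD -!EFinM].
have hp := NE (t *: y + (1 - t) *: s).
rewrite (fin_of fin rs) in hp.
have := le_trans hp (leeD2l _ hc); rewrite -!EFinD lee_fin.
rewrite conv_pt /= => H.
rewrite -(ler_pM2l t0) mulrA mulfV ?gt_eqF // mul1r (addrC (t *: h)).
rewrite -/h in H.
lra.
Unshelve. all: by end_near.
Qed.


Lemma jnorm2 n (d : 'I_n -> nat) (x : joint R d) :
  jnorm x ^+ 2 = \sum_(i < n) sqn (x i).
Proof. by rewrite /jnorm sqr_sqrtr //; apply: sumr_ge0 => i _; exact: sqn_ge0. Qed.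

Lemma jnorm_ge0 n (d : 'I_n -> nat) (x : joint R d) : 0 <= jnorm x.
Proof. exact: sqrtr_ge0. Qed.

Lemma young_joint n (d : 'I_n -> nat) (a b w : joint R d) (al : R) :
  \sum_(i < n) sqn (a i - al *: b i - al *: w i) <=
  (1 + al ^+ 2) * \sum_(i < n) sqn (a i) - 2 * al * jdot b a
  + 2 * al ^+ 2 * \sum_(i < n) sqn (b i) + (1 + 2 * al ^+ 2) * \sum_(i < n) sqn (w i).
Proof.
rewrite /jdot !mulr_sumr -!sumrN -!big_split /=; apply: ler_sum => i _.
rewrite /sqn /vdot !mulr_sumr -!sumrN -!big_split /=; apply: ler_sum => j _.
rewrite !mxE -subr_ge0.
set A := a i 0 j; set B := b i 0 j; set W := w i 0 j.
have -> : (1 + al ^+ 2) * A ^+ 2 - 2 * al * (B * A) + 2 * al ^+ 2 * B ^+ 2 +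
  (1 + 2 * al ^+ 2) * W ^+ 2 - (A - al * B - al * W) ^+ 2
  = (al * A + W) ^+ 2 + (al * (B - W)) ^+ 2 by ring.
by apply: addr_ge0; exact: sqr_ge0.
Qed.


Lemma sq_expand n (d : 'I_n -> nat) (a b : joint R d) (al : R) :
  0 <= \sum_(i < n) sqn (a i) - 2 * al * jdot b a + al ^+ 2 * \sum_(i < n) sqn (b i).
Proof.
have -> : \sum_(i < n) sqn (a i) - 2 * al * jdot b a + al ^+ 2 * \sum_(i < n) sqn (b i)
  = \sum_(i < n) sqn (a i - al *: b i).
  rewrite /jdot !mulr_sumr -!sumrN -!big_split /=; apply: eq_bigr => i _.
  rewrite /sqn /vdot !mulr_sumr -!sumrN -!big_split /=; apply: eq_bigr => j _.
  rewrite !mxE; ring.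
by apply: sumr_ge0 => i _; exact: sqn_ge0.
Qed.

Lemma norm_split n (d : 'I_n -> nat) (u s : joint R d) :
  \sum_(i < n) sqn (u i) <= 2 * \sum_(i < n) sqn (u i - s i) + 2 * \sum_(i < n) sqn (s i).
Proof.
rewrite !mulr_sumr -big_split /=; apply: ler_sum => i _.
rewrite /sqn !mulr_sumr -big_split /=; apply: ler_sum => j _.
rewrite !mxE -subr_ge0.
have -> : 2 * (u i 0 j - s i 0 j) ^+ 2 + 2 * s i 0 j ^+ 2 - u i 0 j ^+ 2
  = (u i 0 j - 2 * s i 0 j) ^+ 2 by ring.
exact: sqr_ge0.
Qed.

Lemma jupd_id n (d : 'I_n -> nat) (x : joint R d) i : jupd x (x i) = x.
Proof.
apply: functional_extensionality_dep => j; rewrite /jupd.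
by case: dfwithP.
Qed.

End Alg.

Section Meas.
Context d (T : measurableType d) (R : realType).

Lemma le_int_nonmeas (mu : {measure set T -> \bar R}) D (f g : T -> \bar R) :
  (forall x, D x -> (0 <= f x)%E) -> (forall x, D x -> (f x <= g x)%E) ->
  (\int[mu]_(x in D) f x <= \int[mu]_(x in D) g x)%E.
Proof.
move=> f0 fg; rewrite !ge0_integralE //; last first.
  by move=> x Dx; apply: le_trans (fg x Dx); exact: f0.
apply: le_ereal_sup => _ [h hf <-]; exists h => //= x.
apply: le_trans (hf x) _; rewrite /patch; case: ifP => // /set_mem Dx.
exact: fg.
Qed.

Lemma gmeas_T (Gen : set (set T)) (hG : forall A, Gen A -> measurable A) (f : T -> R) :
  measurable_fun (setT : set (g_sigma_algebraType Gen)) f -> measurable_fun setT f.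
Proof.
move=> mf _ B mB; have := mf measurableT B mB.
by move=> h; exact: (smallest_sub (@sigma_algebra_measurable _ T) hG h).
Qed.

Lemma cond_meas (P : probability T R) (Gen : set (set T)) (X Y : T -> R) :
  is_cond_exp P <<s Gen >> X Y ->
  measurable_fun (setT : set (g_sigma_algebraType Gen)) Y.
Proof. by move=> [_ hY _] _ B mB; rewrite setTI; exact: hY. Qed.


Lemma mEF (D : set T) (f : T -> R) : measurable_fun D f ->
  measurable_fun D (EFin \o f).
Proof. by move=> mf; apply/measurable_EFinP. Qed.

Lemma ae_le_cond (P : probability T R) (Gen : set (set T)) (N Y h Z W : T -> R) (c2 : R) :
  0 < c2 -> (forall A, Gen A -> measurable A) ->
  is_cond_exp P <<s Gen >> N Y -> is_cond_exp P <<s Gen >> W Z ->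
  (forall t, 0 <= h t) -> measurable_fun (setT : set (g_sigma_algebraType Gen)) h ->
  measurable_fun setT N -> (forall t, 0 <= N t) -> (forall t, 0 <= W t) ->
  (forall t, N t <= h t + c2 * W t) ->
  {ae P, forall t, Y t <= h t + c2 * Z t}.
Proof.
move=> c20 hG cY cZ h0 mhg mN N0 W0 NW.
have sGT : forall A, <<s Gen >> A -> measurable A :=
  fun A hA => smallest_sub (@sigma_algebra_measurable _ T) hG hA.
have mYg := cond_meas cY; have mZg := cond_meas cZ.
have [Y0 _ iY] := cY; have [Z0 _ iZ] := cZ.
set B := fun t => h t + c2 * Z t.
have B0 : forall t, 0 <= B t.
  by move=> t; apply: addr_ge0 => //; apply: mulr_ge0 => //; exact: ltW.
have mBg : measurable_fun (setT : set (g_sigma_algebraType Gen)) B.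
  exact: (measurable_funD mhg (measurable_funM (measurable_cst c2) mZg)).
have mB := gmeas_T hG mBg; have mY := gmeas_T hG mYg.
have mZ := gmeas_T hG mZg; have mh := gmeas_T hG mhg.
have key : forall E, <<s Gen >> E ->
    (\int[P]_(t in E) (Y t)%:E <= \int[P]_(t in E) (B t)%:E)%E.
  move=> E GE; have mE := sGT E GE.
  rewrite iY //.
  set N' := fun t => Num.max (N t - h t) 0.
  have mN' : measurable_fun setT N'.
    rewrite (_ : N' = (N \- h) \max (cst 0)) //.
    apply: measurable_maxr; [exact: measurable_funB | exact: measurable_cst].
  have N'0 : forall t, 0 <= N' t by move=> t; rewrite /N' le_max lexx orbT.
  apply: (@le_trans _ _ (\int[P]_(t in E) ((h t)%:E + (N' t)%:E))%E).
    apply: ge0_le_integral => //.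
    - by move=> t _; rewrite lee_fin.
    - exact: measurable_funS (mEF mN).
    - apply: measurable_funS (_ : measurable_fun setT _) => //.
      by apply/measurable_EFinP; exact: measurable_funD.
    - move=> t _; rewrite -EFinD lee_fin /N'.
      have : N t - h t <= Num.max (N t - h t) 0 by rewrite le_max lexx.
      lra.
  rewrite ge0_integralD //; first last.
  - exact: measurable_funS (mEF mN').
  - by move=> t _; rewrite lee_fin.
  - exact: measurable_funS (mEF mh).
  - by move=> t _; rewrite lee_fin.
  rewrite /B; under [X in (_ <= X)%E]eq_integral do rewrite EFinD EFinM.
  rewrite ge0_integralD //; first last.
  - apply: measurable_funS (_ : measurable_fun setT _) => //.
    by apply/measurable_EFinP; apply: measurable_funM => //; exact: measurable_cst.
  - by move=> t _; rewrite lee_fin; apply: mulr_ge0 => //; exact: ltW.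
  - exact: measurable_funS (mEF mh).
  - by move=> t _; rewrite lee_fin.
  apply: leeD2l.
  rewrite ge0_integralZl //; first last.
  - by rewrite lee_fin ltW.
  - by move=> t _; rewrite lee_fin.
  - exact: measurable_funS (mEF mZ).
  rewrite iZ //.
  have -> : (\int[P]_(x in E) (N' x)%:E = \int[P]_(x in E) (c2%:E * (N' x / c2)%:E))%E.
    by apply: eq_integral => t _; rewrite -EFinM mulrC divfK ?gt_eqF.
  rewrite ge0_integralZl //; first last.
  - by rewrite lee_fin ltW.
  - by move=> t _; rewrite lee_fin divr_ge0 // ltW.
  - apply: measurable_funS (_ : measurable_fun setT _) => //.
    by apply/measurable_EFinP; apply: measurable_funM => //; exact: measurable_cst.
  apply: lee_wpmul2l; first by rewrite lee_fin ltW.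
  apply: le_int_nonmeas.
  - by move=> t _; rewrite lee_fin divr_ge0 // ltW.
  - move=> t _; rewrite lee_fin ler_pdivrMr // mulrC.
    rewrite /N' ge_max; have := NW t; have := W0 t.
    move=> w0 nw; apply/andP; split; first lra.
    by apply: mulr_ge0 => //; exact: ltW.
set S := fun n : nat => ((fun t => Y t - B t) @^-1` `[n.+1%:R^-1, +oo[)
   `&` (B @^-1` `]-oo, n%:R]).
have GS : forall n, <<s Gen >> (S n).
  move=> n; apply: (@measurableI _ (g_sigma_algebraType Gen)).
  - rewrite -[X in measurable X]setTI.
    by apply: (measurable_funB mYg mBg) => //; exact: measurable_itv.
  - rewrite -[X in measurable X]setTI.
    by apply: mBg => //; exact: measurable_itv.
have PS0 : forall n, P (S n) = 0%E.
  move=> n; have mS := sGT _ (GS n).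
  have k := key _ (GS n).
  have e0 : 0 < n.+1%:R^-1 :> R by rewrite invr_gt0 ltr0n.
  have low : (\int[P]_(t in S n) (B t + n.+1%:R^-1)%:E <= \int[P]_(t in S n) (Y t)%:E)%E.
    apply: ge0_le_integral => //.
    - by move=> t _; rewrite lee_fin; apply: addr_ge0 => //; exact: ltW.
    - apply: measurable_funS (_ : measurable_fun setT _) => //.
      by apply/measurable_EFinP; apply: measurable_funD => //; exact: measurable_cst.
    - exact: measurable_funS (mEF mY).
    - move=> t [/= + _]; rewrite in_itv /= andbT lee_fin lerBrDr addrC; exact.
  rewrite (eq_integral (fun t => (B t)%:E + (n.+1%:R^-1)%:E)%E) in low; last by move=> t _; rewrite EFinD.
  rewrite ge0_integralD // in low; last first.
  all: try (by move=> t _; rewrite lee_fin ?ltW).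
  all: try (exact: measurable_cst).
  all: try (exact: measurable_funS (mEF mB)).
  all: try (by move=> t _; rewrite lee_fin; exact: B0).
  rewrite integral_cst // in low.
  have up : (\int[P]_(t in S n) (B t)%:E <= n%:R%:E)%E.
    apply: (@le_trans _ _ (\int[P]_(t in S n) cst (n%:R)%:E t)%E).
      apply: ge0_le_integral => //.
      all: try (by move=> t _; rewrite lee_fin; exact: B0).
      all: try (exact: measurable_funS (mEF mB)).
      all: try (exact: measurable_cst).
      all: try (by move=> t [_ /=]; rewrite in_itv /= lee_fin).
    rewrite integral_cst //.
    rewrite -[leRHS]mule1; apply: lee_wpmul2l; first by rewrite lee_fin ler0n.
    exact: probability_le1.
  have ib0 : (0 <= \int[P]_(t in S n) (B t)%:E)%E.
    by apply: integral_ge0 => t _; rewrite lee_fin.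
  have IBf : (\int[P]_(t in S n) (B t)%:E)%E \is a fin_num.
    rewrite fin_numE; apply/andP; split.
      by apply/negP => /eqP h1; rewrite h1 in ib0.
    by apply/negP => /eqP h1; rewrite h1 leye_eq in up.
  have p0 : (0 <= P (S n))%E := measure_ge0 _ _.
  have p1 : (P (S n) <= 1)%E := probability_le1 P mS.
  have pf : P (S n) \is a fin_num.
    rewrite fin_numE; apply/andP; split.
      by apply/negP => /eqP h1; rewrite h1 in p0.
    by apply/negP => /eqP h1; rewrite h1 leye_eq in p1.
  have H : ((\int[P]_(t in S n) (B t)%:E) + (n.+1%:R^-1)%:E * P (S n) <=
    \int[P]_(t in S n) (B t)%:E)%E := le_trans low k.
  rewrite -(fineK IBf) -(fineK pf) -EFinM -EFinD lee_fin in H.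
  move: H; rewrite gerDl pmulr_rle0 // => hp.
  rewrite -(fineK pf); congr (_%:E); apply/eqP; rewrite eq_le hp /=.
  exact: fine_ge0.
apply: (@negligibleS _ _ _ P (\bigcup_n S n)); last first.
  apply: negligible_bigcup => n; exists (S n); split; [exact: sGT _ (GS n)|exact: PS0|by []].
move=> t /= ntY.
have BY : B t < Y t by rewrite ltNge; apply/negP.
set D := Y t - B t.
have D0 : 0 < D by rewrite /D subr_gt0.
set n := maxn (Num.bound (B t)) (Num.bound D^-1).
have npos : 0 < n.+1%:R :> R by rewrite ltr0n.
exists n => //; split => /=; rewrite in_itv /= ?andbT.
- have h1 : D^-1 < n.+1%:R.
    apply: lt_le_trans (archi_boundP _) _; first by rewrite invr_ge0 ltW.
    by rewrite ler_nat /n; apply: leqW; exact: leq_maxr.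
  rewrite -(ler_pM2r npos) mulVf ?gt_eqF //.
  by rewrite -(ltr_pM2l D0) mulfV ?gt_eqF // in h1; exact: ltW.
- apply: ltW; apply: lt_le_trans (archi_boundP (B0 t)) _.
  by rewrite ler_nat /n; exact: leq_maxl.
Qed.


Lemma coord_gmeas (Gen : set (set T)) (f : T -> R) :
  (forall c, Gen [set t | f t <= c]) ->
  measurable_fun (setT : set (g_sigma_algebraType Gen)) f.
Proof.
move=> hGen mD; apply: (measurability _ (RGenOInfty.measurableE R)) => //.
move=> _ [_ [c ->] <-].
have -> : setT `&` f @^-1` `]c, +oo[ = ~` [set t | f t <= c].
  apply/seteqP; split => t /=; rewrite in_itv /= andbT.
    by move=> [_ ct]; rewrite leNgt ct.
  by move=> /negP; rewrite -ltNge.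
apply: (@measurableC _ (g_sigma_algebraType Gen)).
exact: sub_sigma_algebra.
Qed.

End Meas.

Section Meas2.
Context d (T : measurableType d) (R : realType).

Lemma meas_A n (dd : 'I_n -> nat) (y : T -> joint R dd) (s : joint R dd) :
  (forall i l, measurable_fun setT (fun t => y t i 0 l)) ->
  measurable_fun setT (fun t => jnorm (jsub (y t) s) ^+ 2).
Proof.
move=> my.
rewrite (_ : (fun t => _) = (fun t => \sum_(i < n) \sum_(l < dd i) (y t i 0 l - s i 0 l) ^+ 2)).
  apply: measurable_sum => i; apply: measurable_sum => l.
  apply: measurable_funX; apply: measurable_funB => //; exact: measurable_cst.
apply/funext => t; rewrite jnorm2; apply: eq_bigr => i _.
by apply: eq_bigr => l _; rewrite /jsub !mxE.
Qed.

End Meas2.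

Unset Implicit Arguments.

Theorem lemma2
  (* probability space *)
  (dT : measure_display) (T : measurableType dT) (R : realType)
  (P : probability T R)
  (* game data: n players, player i has strategies in R^{d i} *)
  (n : nat) (d : 'I_n -> nat) (m : 'I_n -> nat)
  (f : forall i : 'I_n, joint R d -> R)
  (r : forall i : 'I_n, 'rV[R]_(d i) -> \bar R)
  (psi : forall i : 'I_n, joint R d -> 'rV[R]_(m i) -> R)
  (xi : forall i : 'I_n, T -> 'rV[R]_(m i))
  (G : joint R d -> joint R d)
  (* constants *)
  (L eta nu1 nu2 alpha : R)
  (* the NE *)
  (xs : joint R d)
  (* VS-PGR: batch sizes, samples, iterates *)
  (Sb : nat -> nat)
  (xis : nat -> forall i : 'I_n, nat -> T -> 'rV[R]_(m i))
  (x : nat -> T -> joint R d) :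
  let Rdom := fun (y : joint R d) => forall j : 'I_n, edom (r j) (y j) in
  let Rdom_but := fun (i : 'I_n) (y : joint R d) =>
      forall j : 'I_n, j != i -> edom (r j) (y j) in
  let gpsi := fun (i : 'I_n) (y : joint R d) (s : 'rV[R]_(m i)) =>
      pgrad (fun z => psi i z s) i y in
  let F := natural_filtration x in
  let wbar := fun (k : nat) (t : T) => jsub
      (fun i : 'I_n => (Sb k)%:R^-1 *: \sum_(p < Sb k) gpsi i (x k t) (xis k i p t))
      (G (x k t)) in
  (* Assumption A *)
  (forall i : 'I_n, elsc (r i) /\ econvex (r i) /\
     forall y, (-oo < r i y)%E) ->
  (forall (i : 'I_n) (y : joint R d), Rdom_but i y ->
     exists U : set 'rV[R]_(d i), [/\ open U, edom (r i) `<=` U,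
       (forall z, U z -> differentiable (fun v => f i (jupd y v)) z),
       {in U, continuous (grad (fun v => f i (jupd y v)))} &
       convex_on U (fun v => f i (jupd y v))]) ->
  (forall (i : 'I_n) (y : joint R d), Rdom_but i y ->
     forall s : 'rV[R]_(m i),
     exists U : set 'rV[R]_(d i), [/\ open U, edom (r i) `<=` U &
       forall z, U z -> differentiable (fun v => psi i (jupd y v) s) z]) ->
  (* f_i(x) = E[psi_i(x; xi_i)] and the samples are realizations of xi_i *)
  (forall (i : 'I_n) (y : joint R d),
     (f i y)%:E = (\int[P]_t (psi i y (xi i t))%:E)%E) ->
  (forall (k : nat) (i : 'I_n) (p : nat), (p < Sb k)%N ->
     forall phi : 'rV[R]_(m i) -> R, continuous phi ->
     (exists M : R, forall v, `|phi v| <= M) ->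
     (\int[P]_t (phi (xis k i p t))%:E = \int[P]_t (phi (xi i t))%:E)%E) ->
  (* G is the pseudo-gradient map *)
  (forall y : joint R d, G y = fun i => pgrad (f i) i y) ->
  (* x* is the Nash equilibrium *)
  is_NE f r xs ->
  (* Assumption B *)
  (forall y z : joint R d, Rdom y -> Rdom z ->
     jnorm (jsub (G y) (G z)) <= L * jnorm (jsub y z)) ->
  0 < eta ->
  (forall y z : joint R d, Rdom y -> Rdom z ->
     jdot (jsub (G y) (G z)) (jsub y z) >= eta * jnorm (jsub y z) ^+ 2) ->
  0 <= nu1 -> 0 <= nu2 ->
  (forall k : nat, exists Z : T -> R,
     is_cond_exp P (F k) (fun t => jnorm (wbar k t) ^+ 2) Z /\
     {ae P, forall t, Z t <= (nu1 ^+ 2 * jnorm (x k t) ^+ 2 + nu2 ^+ 2) / (Sb k)%:R}) ->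
  (* the VS-PGR scheme *)
  (forall (k : nat) (i : 'I_n) (l : 'I_(d i)),
     measurable_fun setT (fun t => x k t i 0 l)) ->
  (forall (t : T) (i : 'I_n), edom (r i) (x 0%N t i)) ->
  (forall (k : nat) (t : T) (i : 'I_n),
     is_prox (r i) alpha
       (x k t i - (alpha / (Sb k)%:R) *: \sum_(p < Sb k) gpsi i (x k t) (xis k i p t))
       (x k.+1 t i)) ->
  (* step size and batch sizes *)
  0 < alpha -> alpha <= L ->
  {homo Sb : a b / (a <= b)%N} ->
  1 / alpha ^+ 2 <= (Sb 0)%:R ->
  let Lt := Num.sqrt (1 + 2 * (1 + 2 * alpha ^+ 2) * nu1 ^+ 2 + 2 * L ^+ 2) in
  let nu2b := 2 * (1 + 2 * alpha ^+ 2) * nu1 ^+ 2 * jnorm xs ^+ 2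
              + (1 + 2 * alpha ^+ 2) * nu2 ^+ 2 in
  forall (k : nat) (Y : T -> R),
    is_cond_exp P (F k) (fun t => jnorm (jsub (x k.+1 t) xs) ^+ 2) Y ->
    {ae P, forall t, Y t <=
      (1 - 2 * alpha * eta + alpha ^+ 2 * Lt ^+ 2) * jnorm (jsub (x k t) xs) ^+ 2
      + nu2b / (Sb k)%:R}.
Proof.
move=> Rdom Rdom_but gpsi F wbar hA hAf hApsi hf hxis hG hNE hLip eta0 hmon
  nu10 nu20 hnoise hmeas hx0 hprox al0 alL hSb hS0 Lt nu2b k Y hY.
set S := (Sb k)%:R : R.
have al2 : 0 < alpha ^+ 2 by apply: exprn_gt0.
have S0pos : 0 < (Sb 0)%:R :> R.
  by apply: lt_le_trans hS0; rewrite div1r invr_gt0.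
have SS : (Sb 0)%:R <= S by rewrite /S ler_nat; apply: hSb.
have Spos : 0 < S by apply: lt_le_trans SS.
have iS : S^-1 <= alpha ^+ 2.
  rewrite -(ler_pM2l Spos) mulfV ?gt_eqF //.
  have h := le_trans hS0 SS.
  by rewrite -(ler_pM2r al2) div1r mulVf ?gt_eqF // in h.
have iS0 : 0 <= S^-1 by rewrite invr_ge0 ltW.
have rfin : forall i v, (-oo < r i v)%E := fun i => (hA i).2.2.
have rcvx : forall i, econvex (r i) := fun i => (hA i).2.1.
have domx : forall j t i, (r i (x j t i) < +oo)%E.
  elim => [|j IH] t i; first exact: hx0.
  exact: (prox_ineq al0 (rcvx i) (rfin i) (hprox j t i) (IH t i)).1.
have domxs : forall i, (r i (xs i) < +oo)%E.
  move=> i; have H := hNE i (x 0%N point i).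
  rewrite (fin_of (rfin i) (hx0 point i)) -EFinD in H.
  rewrite ltey; apply/eqP => h; move: H; rewrite h /= leye_eq.
  done.
have block : forall t i, sqn (x k.+1 t i - xs i) <=
    sqn ((x k t i - xs i) - alpha *: (G (x k t) i - G xs i) - alpha *: wbar k t i).
  move=> t i.
  have [_ hp] := prox_ineq al0 (rcvx i) (rfin i) (hprox k t i) (domxs i).
  have [U [oU domU dU _ _]] := hAf i xs (fun j _ => domxs j).
  have dF : differentiable (fun v => f i (jupd xs v)) (xs i) := dU _ (domU _ (domxs i)).
  have hNE' : forall v, (((fun v => f i (jupd xs v)) (xs i))%:E + r i (xs i) <=
      ((fun v => f i (jupd xs v)) v)%:E + r i v)%E.
    by move=> v /=; rewrite jupd_id; exact: hNE.
  have hn := NE_ineq (rcvx i) (rfin i) hNE' dF (domxs i) (domx k.+1 t i).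
  have gE : grad (fun v => f i (jupd xs v)) (xs i) = G xs i by rewrite hG.
  rewrite gE in hn.
  set z := x k t i - (alpha / (Sb k)%:R) *: \sum_(p < Sb k) gpsi i (x k t) (xis k i p t).
  have := @block_ineq _ _ (x k.+1 t i) (xs i) z (G xs i) alpha al0.
  have -> : z - xs i + alpha *: G xs i =
     (x k t i - xs i) - alpha *: (G (x k t) i - G xs i) - alpha *: wbar k t i.
    rewrite /z /wbar /jsub /=; apply/rowP => j; rewrite !mxE; ring.
  apply; rewrite -/z in hp; lra.
set A := fun t => jnorm (jsub (x k t) xs) ^+ 2.
set W := fun t => jnorm (wbar k t) ^+ 2.
set c1 := 1 + alpha ^+ 2 - 2 * alpha * eta + 2 * alpha ^+ 2 * L ^+ 2.
set c2 := 1 + 2 * alpha ^+ 2.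
have c2pos : 0 < c2 by rewrite /c2; lra.
have keyAB : forall t, eta * A t <= jdot (jsub (G (x k t)) (G xs)) (jsub (x k t) xs) /\ \sum_(i < n) sqn (jsub (G (x k t)) (G xs) i) <= L ^+ 2 * A t.
  move=> t; split; first (apply: hmon; [exact: (fun i => domx k t i)|exact: domxs]).
  rewrite -jnorm2 /A -exprMn; have h := hLip _ _ (fun i => domx k t i) domxs.
  by rewrite !expr2; apply: ler_pM => //; exact: jnorm_ge0.
have pw : forall t, jnorm (jsub (x k.+1 t) xs) ^+ 2 <= c1 * A t + c2 * W t.
  move=> t; rewrite jnorm2 /A /W !jnorm2.
  apply: le_trans (ler_sum _ (fun i _ => block t i)) _.
  apply: le_trans (young_joint (jsub (x k t) xs) (jsub (G (x k t)) (G xs)) (wbar k t) alpha) _.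
  have [h1 h2] := keyAB t; rewrite /A jnorm2 in h1 h2.
  have h3 := ler_wpM2l (ltW al0) h1.
  have h4 := ler_wpM2l (ltW al2) h2.
  rewrite /c1 /c2; lra.
have h0 : forall t, 0 <= c1 * A t.
  move=> t; have [h1 h2] := keyAB t.
  have h3 := ler_wpM2l (ltW al0) h1.
  have h4 := ler_wpM2l (ltW al2) h2.
  have h5 := sq_expand (jsub (x k t) xs) (jsub (G (x k t)) (G xs)) alpha.
  have A0 : 0 <= A t by apply: sqr_ge0.
  have h6 : 0 <= alpha ^+ 2 * A t by apply: mulr_ge0 => //; exact: ltW.
  have h7 : 0 <= alpha ^+ 2 * (L ^+ 2 * A t).
    by apply: mulr_ge0; [exact: ltW|apply: mulr_ge0 => //; exact: sqr_ge0].
  rewrite /A jnorm2 in h1 h2 h3 h4 h6 h7 *; rewrite /c1; lra.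
set Gen := [set A0 : set T | exists (j : nat) (i : 'I_n) (l : 'I_(d i)) (c : R),
          (j <= k)%N /\ A0 = [set t | x j t i 0 l <= c]].
have GenM : forall A0, Gen A0 -> measurable A0.
  move=> _ [j [i [l [c [_ ->]]]]].
  rewrite (_ : [set t | x j t i 0 l <= c] = setT `&` (fun t => x j t i 0 l) @^-1` `]-oo, c]).
    by apply: hmeas => //; exact: measurable_itv.
  by rewrite setTI; apply/seteqP; split => t; rewrite /= in_itv /=.
have [Z [cZ Zb]] := hnoise k.
have mhg : measurable_fun (setT : set (g_sigma_algebraType Gen)) (fun t => c1 * A t).
  apply: measurable_funM; first exact: measurable_cst.
  apply: meas_A => i l; apply: coord_gmeas => c.
  by exists k, i, l, c; split.
have mN : measurable_fun setT (fun t => jnorm (jsub (x k.+1 t) xs) ^+ 2).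
  by apply: meas_A => i l; exact: hmeas.
have ae1 := @ae_le_cond _ _ _ P Gen _ Y _ Z W c2 c2pos GenM hY cZ h0 mhg mN
  (fun t => sqr_ge0 _) (fun t => sqr_ge0 _) pw.
move: ae1 Zb; apply: filterS2 => t h1 h2.
have hX : jnorm (x k t) ^+ 2 <= 2 * A t + 2 * jnorm xs ^+ 2.
  by rewrite /A !jnorm2; exact: norm_split.
have hLt : Lt ^+ 2 = 1 + 2 * c2 * nu1 ^+ 2 + 2 * L ^+ 2.
  rewrite /Lt sqr_sqrtr // /c2.
  have := sqr_ge0 nu1; have := sqr_ge0 L; have := sqr_ge0 alpha; nra.
rewrite hLt /nu2b -/c2 -/(A t).
have K0 : 0 <= c2 * nu1 ^+ 2 by apply: mulr_ge0; [exact: ltW|exact: sqr_ge0].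
have A0 : 0 <= A t by exact: sqr_ge0.
have e1 := ler_wpM2l (mulr_ge0 K0 iS0) hX.
have e2 : 2 * (c2 * nu1 ^+ 2) * A t * S^-1 <= 2 * (c2 * nu1 ^+ 2) * A t * alpha ^+ 2.
  apply: ler_wpM2l => //; apply: mulr_ge0 => //; apply: mulr_ge0 => //.
have e3 := ler_wpM2l (ltW c2pos) h2.
rewrite -/S in e3 *.
move: h1 e1 e2 e3.
set X := jnorm (x k t) ^+ 2; set XS := jnorm xs ^+ 2.
move: (A t) => At h1 e1 e2 e3.
rewrite /c1 in h1.

nra.
Qed.
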